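(* Let $F(z)=\sum_{k=0}^\infty b_k z^k\in\mathcal{B}$ and let $n\ge 1$ be an integer. Then \[ \sum_{k=n+1}^{\infty}k^2|b_k|^2r^{2k-2}\le \frac{(n+2)^{n+2}}{4n^n}\,r^{2n},\qquad 0\le r\le \sqrt{\frac{n}{n+2}}. \] Moreover, equality holds for the function $F_n\in\mathcal{B}$ with $F_n(0)=0$ and $F_n'(z)=\frac{n+2}{2}\left(\frac{n+2}{n}\right)^{n/2}z^n$.
   Context: $\mathbb{D}$ denotes the open unit disc. $\mathcal{B}$ is the class of functions $F$ analytic in $\mathbb{D}$ satisfying $|F'(z)|\le \frac{1}{1-|z|^2}$ for all $z\in\mathbb{D}$. For $F\in\mathcal{B}$ we write its Taylor expansion as $F(z)=\sum_{k=0}^\infty b_k z^k$. *)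

(* Defs.v *)
From Stdlib Require Import Reals Lra.
Open Scope R_scope.

Definition Cx : Type := (R * R)%type.
Definition RtoC (x : R) : Cx := (x, 0).
Definition Cplus (z w : Cx) : Cx := (fst z + fst w, snd z + snd w).
Definition Copp (z : Cx) : Cx := (- fst z, - snd z).
Definition Cminus (z w : Cx) : Cx := Cplus z (Copp w).
Definition Cmult (z w : Cx) : Cx :=
  (fst z * fst w - snd z * snd w, fst z * snd w + snd z * fst w).
Definition Cmod (z : Cx) : R := sqrt (fst z ^ 2 + snd z ^ 2).
Fixpoint Cpow (z : Cx) (n : nat) : Cx :=
  match n with O => RtoC 1 | S m => Cmult z (Cpow z m) end.

Definition in_disc (z : Cx) : Prop := Cmod z < 1.

Definition has_Cderiv (F : Cx -> Cx) (z d : Cx) : Prop :=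
  forall eps : R, 0 < eps -> exists delta : R, 0 < delta /\
    forall h : Cx, 0 < Cmod h < delta ->
      Cmod (Cminus (Cminus (F (Cplus z h)) (F z)) (Cmult d h)) <= eps * Cmod h.

Definition Ccv (u : nat -> Cx) (l : Cx) : Prop :=
  forall eps : R, 0 < eps -> exists N : nat, forall m : nat, (N <= m)%nat ->
    Cmod (Cminus (u m) l) < eps.

Fixpoint Cpsum (b : nat -> Cx) (z : Cx) (N : nat) : Cx :=
  match N with
  | O => Cmult (b O) (Cpow z O)
  | S M => Cplus (Cpsum b z M) (Cmult (b (S M)) (Cpow z (S M)))
  end.

Definition taylor_on_disc (F : Cx -> Cx) (b : nat -> Cx) : Prop :=
  forall z : Cx, in_disc z -> Ccv (Cpsum b z) (F z).

Definition in_Bloch_B (F : Cx -> Cx) : Prop :=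
  exists F' : Cx -> Cx, forall z : Cx, in_disc z ->
    has_Cderiv F z (F' z) /\ Cmod (F' z) <= 1 / (1 - Cmod z ^ 2).

Definition tail_sum (b : nat -> Cx) (n : nat) (r : R) (m : nat) : R :=
  sum_f_R0 (fun j => let k := (n + 1 + j)%nat in
              INR k ^ 2 * Cmod (b k) ^ 2 * r ^ (2 * k - 2)) m.

Definition sharp_bound (n : nat) (r : R) : R :=
  INR (n + 2) ^ (n + 2) / (4 * INR n ^ n) * r ^ (2 * n).

Definition cst (n : nat) : R :=
  INR (n + 2) / 2 * Rpower (INR (n + 2) / INR n) (INR n / 2).

(* Main.v *)
From Stdlib Require Import Reals Lra Lia Psatz.
From Coquelicot Require Import Coquelicot.
Require Import Defs.
Open Scope R_scope.

Lemma eCplus z w : Cplus z w = (z + w)%C. Proof. reflexivity. Qed.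
Lemma eCmult z w : Cmult z w = (z * w)%C. Proof. reflexivity. Qed.
Lemma eCopp z : Copp z = (- z)%C. Proof. reflexivity. Qed.
Lemma eCminus z w : Cminus z w = (z - w)%C. Proof. reflexivity. Qed.
Lemma eCmod z : Cmod z = Complex.Cmod z. Proof. reflexivity. Qed.
Lemma eRtoC x : RtoC x = Complex.RtoC x. Proof. reflexivity. Qed.
Lemma eCpow z n : Cpow z n = Complex.Cpow z n.
Proof. induction n; simpl; [reflexivity| rewrite IHn; reflexivity]. Qed.

Fixpoint csum (f : nat -> C) (N : nat) : C :=
  match N with O => f O | S M => (csum f M + f (S M))%C end.

Lemma csum_ext (f g : nat -> C) N : (forall k, (k <= N)%nat -> f k = g k) -> csum f N = csum g N.
Proof.
  induction N; intros H; simpl. apply H; lia.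
  rewrite IHN by (intros; apply H; lia). rewrite H by lia. reflexivity.
Qed.

Lemma csum_plus f g N : csum (fun k => f k + g k)%C N = (csum f N + csum g N)%C.
Proof. induction N; simpl. reflexivity. rewrite IHN. ring. Qed.

Lemma csum_minus f g N : csum (fun k => f k - g k)%C N = (csum f N - csum g N)%C.
Proof. induction N; simpl. reflexivity. rewrite IHN. ring. Qed.

Lemma csum_scal c f N : csum (fun k => c * f k)%C N = (c * csum f N)%C.
Proof. induction N; simpl. reflexivity. rewrite IHN. ring. Qed.

Lemma csum_zero (f : nat -> C) N : (forall k, (k <= N)%nat -> f k = 0%C) -> csum f N = 0%C.
Proof.
  induction N; intros H; simpl. apply H; lia.
  rewrite IHN by (intros; apply H; lia). rewrite H by lia. ring.
Qed.

Lemma csum_shift f N : csum f (S N) = (f O + csum (fun j => f (S j)) N)%C.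
Proof. induction N. simpl. reflexivity. change (csum f (S (S N))) with (csum f (S N) + f (S (S N)))%C.
  rewrite IHN. simpl. ring. Qed.

Lemma Cmod_csum f N : Complex.Cmod (csum f N) <= sum_f_R0 (fun k => Complex.Cmod (f k)) N.
Proof.
  induction N; simpl. lra.
  eapply Rle_trans. apply Cmod_triangle. lra.
Qed.

Lemma fst_csum f N : fst (csum f N) = sum_f_R0 (fun k => fst (f k)) N.
Proof. induction N; simpl. reflexivity. rewrite IHN. reflexivity. Qed.

Lemma Cpsum_csum b z N :
  Cpsum b z N = csum (fun k => b k * Complex.Cpow z k)%C N.
Proof. induction N. reflexivity.
  change (Cpsum b z (S N)) with (Cplus (Cpsum b z N) (Cmult (b (S N)) (Cpow z (S N)))).
  rewrite IHN, eCpow. reflexivity. Qed.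

Lemma Cpow_RtoC x k : Complex.Cpow (Complex.RtoC x) k = Complex.RtoC (x ^ k).
Proof. induction k; simpl. reflexivity. rewrite IHk. rewrite RtoC_mult. reflexivity. Qed.

Lemma Cmod_RtoC_mult x (c : C) : Complex.Cmod (Complex.RtoC x * c)%C = Rabs x * Complex.Cmod c.
Proof. rewrite Cmod_mult, Cmod_R. reflexivity. Qed.

Lemma sum_le_sum f g N : (forall k, (k <= N)%nat -> f k <= g k) -> sum_f_R0 f N <= sum_f_R0 g N.
Proof. intros; apply sum_Rle; auto. Qed.

Lemma sum_nonneg f N : (forall k, (k <= N)%nat -> 0 <= f k) -> 0 <= sum_f_R0 f N.
Proof.
  induction N; intros H; simpl. apply H; lia.
  assert (0 <= f (S N)) by (apply H; lia). assert (0 <= sum_f_R0 f N) by (apply IHN; intros; apply H; lia). lra.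
Qed.

Lemma sum_mono f N M : (forall k, 0 <= f k) -> (N <= M)%nat -> sum_f_R0 f N <= sum_f_R0 f M.
Proof.
  intros H HNM. induction HNM. lra. simpl. specialize (H (S m)). lra.
Qed.

Lemma sum_term_le f N k : (forall k, 0 <= f k) -> (k <= N)%nat -> f k <= sum_f_R0 f N.
Proof.
  intros H Hk. induction Hk.
  destruct k; simpl. lra. assert (0 <= sum_f_R0 f k) by (apply sum_nonneg; auto). lra.
  simpl. specialize (H (S m)). lra.
Qed.

Lemma geom_sum_bound mu N : 0 <= mu < 1 -> sum_f_R0 (fun k => mu ^ k) N <= 1 / (1 - mu).
Proof.
  intros Hmu. pose proof (GP_finite mu N) as G.
  assert (0 <= mu ^ (N+1)) by (apply pow_le; lra).
  assert (E: sum_f_R0 (fun k => mu ^ k) N = (1 - mu ^ (N+1)) / (1 - mu)).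
  { field_simplify_eq; [ | lra]. lra. }
  rewrite E. apply Rmult_le_compat_r. apply Rlt_le, Rinv_0_lt_compat; lra. lra.
Qed.

Lemma sum_pointwise_geom f K mu N : 0 <= mu < 1 -> (forall k, f k <= K * mu ^ k) ->
  sum_f_R0 f N <= K * (1 / (1 - mu)) \/ K < 0.
Proof.
  intros Hmu H. destruct (Rlt_dec K 0). right; auto. left.
  eapply Rle_trans. apply sum_le_sum. intros k _; rewrite (Rmult_comm (mu ^ k)); apply H.
  rewrite <- scal_sum. apply Rmult_le_compat_l. lra.
  apply geom_sum_bound; auto.
Qed.

Lemma bernoulli_ineq d k : 0 <= d -> 1 + INR k * d <= (1 + d) ^ k.
Proof.
  intros Hd. induction k. simpl. lra.
  rewrite S_INR. simpl. assert (0 <= INR k * d) by (apply Rmult_le_pos; [apply pos_INR|lra]). nra.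
Qed.

Lemma pow_k2_bound q : 0 <= q < 1 -> exists K mu, 0 <= K /\ 0 <= mu < 1 /\
  forall k, INR k ^ 2 * q ^ k <= K * mu ^ k.
Proof.
  intros Hq.
  set (m0 := sqrt (sqrt q)).
  assert (Hm0 : 0 <= m0 < 1).
  { unfold m0. split. apply sqrt_pos. assert (sqrt q < 1).
    { rewrite <- sqrt_1. apply sqrt_lt_1; lra. }
    rewrite <- sqrt_1. apply sqrt_lt_1. apply sqrt_pos. lra. lra. }
  assert (Hq4 : q = m0 ^ 4).
  { unfold m0. replace 4%nat with (2*2)%nat by reflexivity. rewrite pow_mult.
    rewrite pow2_sqrt by (apply sqrt_pos). rewrite pow2_sqrt by lra. reflexivity. }
  set (l := Rmax m0 (1/2)).
  assert (Hl : 1/2 <= l < 1) by (unfold l; split; [apply Rmax_r| apply Rmax_lub_lt; lra]).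
  assert (Hml : 0 <= m0 <= l) by (split; [lra| apply Rmax_l]).
  set (d := 1 / l - 1).
  assert (Hd : 0 < d). { replace d with ((1-l)/l) by (unfold d; field; lra). apply Rdiv_lt_0_compat; lra. }
  exists (1 / d ^ 2), l. split. apply Rlt_le. apply Rdiv_lt_0_compat; [lra| apply pow_lt; lra].
  split. lra. intros k.
  assert (Hb := bernoulli_ineq d k (Rlt_le _ _ Hd)).
  assert (Hld : l * (1 + d) = 1) by (unfold d; field; lra).
  assert (Hx : l ^ k * (1 + INR k * d) <= 1).
  { assert (E: l^k * (1+d)^k = 1) by (rewrite <- Rpow_mult_distr, Hld; apply pow1).
    apply Rle_trans with (l^k*(1+d)^k); [apply Rmult_le_compat_l; [apply pow_le; lra| auto] | lra]. }
  set (x := l ^ k) in *. set (y := INR k * d) in *.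
  assert (Hx0 : 0 <= x) by (apply pow_le; lra).
  assert (Hy0 : 0 <= y) by (unfold y; apply Rmult_le_pos; [apply pos_INR| lra]).
  assert (Hxy : x * y <= 1) by nra.
  assert (Hx1 : x <= 1) by nra.
  assert (Hqk : q ^ k <= x ^ 4).
  { rewrite Hq4. unfold x. rewrite <- !pow_mult. rewrite Nat.mul_comm. apply pow_incr. lra. }
  assert (Hk : INR k = y / d) by (unfold y; field; lra).
  rewrite Hk.
  apply Rle_trans with ((y / d) ^ 2 * x ^ 4).
  apply Rmult_le_compat_l. apply pow2_ge_0. auto.
  replace ((y / d) ^ 2 * x ^ 4) with ((x*y)^2 * x * x / d ^ 2) by (field; lra).
  replace (1 / d ^ 2 * x) with (1 * x / d^2) by (field; lra).
  unfold Rdiv. apply Rmult_le_compat_r. apply Rlt_le, Rinv_0_lt_compat, pow_lt; lra.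
  assert (0 <= x*y) by (apply Rmult_le_pos; lra).
  assert (0 <= (x*y)^2 <= 1) by (split; [apply pow2_ge_0| simpl; nra]).
  set (p := (x*y)^2) in *. assert (0 <= (1-p)*(x*x)) by (apply Rmult_le_pos; nra). nra.
Qed.
Lemma Cmod_term (c : C) s k : 0 <= s -> Complex.Cmod (c * Complex.Cpow (Complex.RtoC s) k)%C = Complex.Cmod c * s ^ k.
Proof. intros Hs. rewrite Cpow_RtoC, Cmod_mult, Cmod_R, Rabs_pos_eq; [reflexivity| apply pow_le; lra]. Qed.

Lemma coef_bounded F b s : taylor_on_disc F b -> 0 < s < 1 ->
  exists A, 0 <= A /\ forall k, Complex.Cmod (b k) * s ^ k <= A.
Proof.
  intros HT Hs.
  assert (Hd : in_disc (RtoC s)).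
  { unfold in_disc. rewrite eCmod, eRtoC, Cmod_R, Rabs_pos_eq; lra. }
  destruct (HT _ Hd 1 Rlt_0_1) as [N HN].
  set (g := fun k => Complex.Cmod (b k) * s ^ k).
  assert (Hg : forall k, 0 <= g k).
  { intros k; unfold g; apply Rmult_le_pos; [apply Cmod_ge_0| apply pow_le; lra]. }
  exists (2 + sum_f_R0 g N). split.
  { assert (0 <= sum_f_R0 g N) by (apply sum_nonneg; auto). lra. }
  intros k. change (Complex.Cmod (b k) * s ^ k) with (g k).
  destruct (Compare_dec.le_lt_dec k N) as [Hk|Hk].
  { assert (g k <= sum_f_R0 g N) by (apply sum_term_le; auto). lra. }
  destruct k as [|j]. lia.
  assert (H1 := HN (S j) ltac:(lia)). assert (H2 := HN j ltac:(lia)).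
  rewrite eCmod, eCminus in H1, H2.
  change (Cpsum b (RtoC s) (S j)) with (Cplus (Cpsum b (RtoC s) j) (Cmult (b (S j)) (Cpow (RtoC s) (S j)))) in H1.
  rewrite eCplus, eCmult, eCpow, eRtoC in H1. rewrite eRtoC in H2.
  set (P := Cpsum b (Complex.RtoC s) j) in *. set (Fz := F (Complex.RtoC s)) in *.
  set (t := (b (S j) * Complex.Cpow (Complex.RtoC s) (S j))%C) in *.
  assert (Et : t = ((P + t - Fz) - (P - Fz))%C) by ring.
  assert (Ht : Complex.Cmod t < 2).
  { rewrite Et. eapply Rle_lt_trans. apply Cmod_triangle. rewrite Cmod_opp. lra. }
  assert (0 <= sum_f_R0 g N) by (apply sum_nonneg; auto).
  unfold t in Ht. rewrite Cmod_term in Ht by lra. change (g (S j) < 2) in Ht. lra.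
Qed.

Fixpoint Dp (z : C) (k : nat) : C :=
  match k with O => 0%C | S j => (z * Dp z j + Complex.Cpow z j)%C end.

Lemma Dp_S z j : Dp z (S j) = (Complex.RtoC (INR (S j)) * Complex.Cpow z j)%C.
Proof.
  induction j. simpl. ring.
  change (Dp z (S (S j))) with (z * Dp z (S j) + Complex.Cpow z (S j))%C.
  rewrite IHj. rewrite (S_INR (S j)), RtoC_plus. simpl. ring.
Qed.

Lemma Cpow_S (z : C) k : Complex.Cpow z (S k) = (z * Complex.Cpow z k)%C.
Proof. reflexivity. Qed.

Lemma Csub_self (c : C) : (c - c)%C = 0%C. Proof. ring. Qed.
Lemma Csub0 (c h : C) : (c - c - h * 0)%C = 0%C. Proof. ring. Qed.

Lemma E_bound (z h : C) rho k : Complex.Cmod z <= rho -> Complex.Cmod (z + h)%C <= rho ->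
  rho * Complex.Cmod (Complex.Cpow (z+h) k - Complex.Cpow z k)%C <= INR k * rho ^ k * Complex.Cmod h.
Proof.
  intros Hz Hzh. assert (Hr : 0 <= rho) by (pose proof (Cmod_ge_0 z); lra).
  induction k.
  { change (Complex.Cpow z 0) with (Complex.Cpow (z+h) 0). rewrite Csub_self, Cmod_0. simpl. lra. }
  rewrite !Cpow_S.
  replace ((z + h) * Complex.Cpow (z + h) k - z * Complex.Cpow z k)%C with
    ((z + h) * (Complex.Cpow (z + h) k - Complex.Cpow z k) + h * Complex.Cpow z k)%C by ring.
  set (E := (Complex.Cpow (z + h) k - Complex.Cpow z k)%C) in *.
  assert (H1 : Complex.Cmod ((z + h) * E + h * Complex.Cpow z k)%C <=
     Complex.Cmod (z+h) * Complex.Cmod E + Complex.Cmod h * Complex.Cmod z ^ k).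
  { eapply Rle_trans. apply Cmod_triangle. rewrite !Cmod_mult, Cmod_pow. lra. }
  assert (Hzk : Complex.Cmod z ^ k <= rho ^ k) by (apply pow_incr; split; [apply Cmod_ge_0| lra]).
  assert (HE0 : 0 <= Complex.Cmod E) by apply Cmod_ge_0.
  assert (Hh0 : 0 <= Complex.Cmod h) by apply Cmod_ge_0.
  assert (H2 : Complex.Cmod (z+h) * (rho * Complex.Cmod E) <= rho * (INR k * rho ^ k * Complex.Cmod h)).
  { apply Rmult_le_compat; auto. apply Cmod_ge_0. apply Rmult_le_pos; lra. }
  assert (H3 : rho * (Complex.Cmod h * Complex.Cmod z ^ k) <= rho * (Complex.Cmod h * rho ^ k)).
  { apply Rmult_le_compat_l; auto. apply Rmult_le_compat_l; auto. }
  rewrite S_INR. simpl pow.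
  apply Rle_trans with (rho * (Complex.Cmod (z+h) * Complex.Cmod E + Complex.Cmod h * Complex.Cmod z ^ k)).
  apply Rmult_le_compat_l; auto. nra.
Qed.

Lemma D_bound (z h : C) rho k : Complex.Cmod z <= rho -> Complex.Cmod (z + h)%C <= rho ->
  rho ^ 2 * Complex.Cmod (Complex.Cpow (z+h) k - Complex.Cpow z k - h * Dp z k)%C
   <= INR k ^ 2 * rho ^ k * Complex.Cmod h ^ 2.
Proof.
  intros Hz Hzh. assert (Hr : 0 <= rho) by (pose proof (Cmod_ge_0 z); lra).
  induction k.
  { change (Complex.Cpow z 0) with (Complex.Cpow (z+h) 0). simpl Dp. rewrite Csub0. rewrite Cmod_0. simpl. lra. }
  assert (HEb := E_bound z h rho k Hz Hzh).
  change (Dp z (S k)) with (z * Dp z k + Complex.Cpow z k)%C.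
  rewrite !Cpow_S.
  replace ((z + h) * Complex.Cpow (z + h) k - z * Complex.Cpow z k - h * (z * Dp z k + Complex.Cpow z k))%C with
    (z * (Complex.Cpow (z + h) k - Complex.Cpow z k - h * Dp z k) + h * (Complex.Cpow (z + h) k - Complex.Cpow z k))%C by ring.
  set (E := (Complex.Cpow (z + h) k - Complex.Cpow z k)%C) in *.
  set (D := (Complex.Cpow (z + h) k - Complex.Cpow z k - h * Dp z k)%C) in *.
  assert (H1 : Complex.Cmod (z * D + h * E)%C <=
     Complex.Cmod z * Complex.Cmod D + Complex.Cmod h * Complex.Cmod E).
  { eapply Rle_trans. apply Cmod_triangle. rewrite !Cmod_mult. lra. }
  assert (HE0 : 0 <= Complex.Cmod E) by apply Cmod_ge_0.
  assert (HD0 : 0 <= Complex.Cmod D) by apply Cmod_ge_0.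
  assert (Hh0 : 0 <= Complex.Cmod h) by apply Cmod_ge_0.
  assert (Hz0 : 0 <= Complex.Cmod z) by apply Cmod_ge_0.
  assert (H2 : Complex.Cmod z * (rho ^ 2 * Complex.Cmod D) <= rho * (INR k ^ 2 * rho ^ k * Complex.Cmod h ^ 2)).
  { apply Rmult_le_compat; auto. apply Rmult_le_pos; [apply pow_le|]; lra. }
  assert (H3 : (rho * Complex.Cmod h) * (rho * Complex.Cmod E) <= (rho * Complex.Cmod h) * (INR k * rho ^ k * Complex.Cmod h)).
  { apply Rmult_le_compat_l; auto. apply Rmult_le_pos; lra. }
  assert (Hk0 : 0 <= INR k) by apply pos_INR.
  assert (Hrk : 0 <= rho ^ k) by (apply pow_le; lra).
  assert (H4 : 0 <= INR k * rho ^ (S k) * Complex.Cmod h ^ 2).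
  { apply Rmult_le_pos. apply Rmult_le_pos; auto. apply pow_le; lra. apply pow2_ge_0. }
  apply Rle_trans with (rho ^ 2 * (Complex.Cmod z * Complex.Cmod D + Complex.Cmod h * Complex.Cmod E)).
  apply Rmult_le_compat_l; auto. apply pow2_ge_0.
  assert (H5 : 0 <= rho * rho ^ k * Complex.Cmod h ^ 2).
  { apply Rmult_le_pos. apply Rmult_le_pos; auto. apply pow2_ge_0. }
  rewrite S_INR. simpl pow in *. nra.
Qed.
Lemma coef_k2 F b rho : taylor_on_disc F b -> 0 <= rho < 1 ->
  exists K mu, 0 <= K /\ 0 <= mu < 1 /\
   forall k, Complex.Cmod (b k) * INR k ^ 2 * rho ^ k <= K * mu ^ k.
Proof.
  intros HT Hr. set (s := (1 + rho) / 2).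
  destruct (coef_bounded F b s HT ltac:(unfold s; lra)) as [A [HA0 HA]].
  destruct (pow_k2_bound (rho / s)) as [K0 [mu [HK0 [Hmu HK]]]].
  { unfold s; split. apply Rmult_le_pos; [lra| apply Rlt_le, Rinv_0_lt_compat; lra].
    apply Rmult_lt_reg_r with ((1+rho)/2). lra. field_simplify; lra. }
  exists (A * K0), mu. split. apply Rmult_le_pos; auto. split; auto.
  intros k.
  assert (E : Complex.Cmod (b k) * INR k ^ 2 * rho ^ k = (Complex.Cmod (b k) * s ^ k) * (INR k ^ 2 * (rho / s) ^ k)).
  { unfold Rdiv. rewrite Rpow_mult_distr. rewrite pow_inv. field. apply pow_nonzero. unfold s; lra. }
  rewrite E, (Rmult_assoc A). apply Rmult_le_compat; auto.
  apply Rmult_le_pos; [apply Cmod_ge_0| apply pow_le; unfold s; lra].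
  apply Rmult_le_pos; [apply pow2_ge_0| apply pow_le]. apply Rmult_le_pos; [lra| apply Rlt_le, Rinv_0_lt_compat; unfold s; lra].
Qed.

Lemma sum_k2_bound F b rho : taylor_on_disc F b -> 0 <= rho < 1 ->
  exists B, 0 < B /\ forall M, sum_f_R0 (fun k => Complex.Cmod (b k) * INR k ^ 2 * rho ^ k) M <= B.
Proof.
  intros HT Hr. destruct (coef_k2 F b rho HT Hr) as [K [mu [HK [Hmu H]]]].
  exists (K * (1 / (1 - mu)) + 1). split.
  { assert (0 <= K * (1/(1-mu))) by (apply Rmult_le_pos; [lra| apply Rlt_le, Rdiv_lt_0_compat; lra]). lra. }
  intros M. destruct (sum_pointwise_geom _ K mu M Hmu H); lra.
Qed.

Lemma csum_diff_id (b : nat -> C) (z h : C) N :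
  (csum (fun k => b k * Complex.Cpow (z + h) k) N - csum (fun k => b k * Complex.Cpow z k) N)%C =
  (h * csum (fun k => b k * Dp z k) N +
   csum (fun k => b k * (Complex.Cpow (z+h) k - Complex.Cpow z k - h * Dp z k)) N)%C.
Proof.
  rewrite <- csum_minus, <- csum_scal, <- csum_plus. apply csum_ext. intros; ring.
Qed.

Lemma deriv_series F b z d : taylor_on_disc F b -> Complex.Cmod z < 1 -> has_Cderiv F z d ->
  forall eps, 0 < eps -> exists N0, forall N, (N0 <= N)%nat ->
   Complex.Cmod (csum (fun k => b k * Dp z k) N - d)%C < eps.
Proof.
  intros HT Hz HD eps Heps.
  set (rho := (1 + Complex.Cmod z) / 2).
  assert (Hz0 := Cmod_ge_0 z).
  assert (Hrho : 1/2 <= rho < 1) by (unfold rho; lra).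
  destruct (sum_k2_bound F b rho HT ltac:(lra)) as [B [HB0 HB]].
  destruct (HD (eps/4) ltac:(lra)) as [delta [Hdelta Hdh]].
  set (eta := Rmin (delta/2) (Rmin (rho - Complex.Cmod z) (eps * rho^2 / (4*B)))).
  assert (Heta0 : 0 < eta).
  { unfold eta. apply Rmin_pos. lra. apply Rmin_pos. unfold rho; lra.
    apply Rdiv_lt_0_compat. apply Rmult_lt_0_compat; [lra| apply pow_lt; lra]. lra. }
  assert (Heta1 : eta <= delta/2) by apply Rmin_l.
  assert (Heta2 : eta <= rho - Complex.Cmod z) by (eapply Rle_trans; [apply Rmin_r| apply Rmin_l]).
  assert (Heta3 : eta <= eps * rho^2 / (4*B)) by (eapply Rle_trans; [apply Rmin_r| apply Rmin_r]).
  set (h := Complex.RtoC eta).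
  assert (Hh : Complex.Cmod h = eta) by (unfold h; rewrite Cmod_R, Rabs_pos_eq; lra).
  assert (Hd1 : Complex.Cmod (F (z+h)%C - F z - d*h)%C <= eps/4 * eta).
  { rewrite <- Hh. apply (Hdh h). rewrite eCmod, Hh; lra. }
  assert (Hzh : Complex.Cmod (z + h)%C <= rho).
  { eapply Rle_trans. apply Cmod_triangle. lra. }
  assert (Hzhd : in_disc (z + h)%C) by (unfold in_disc; rewrite eCmod; lra).
  assert (Hzd : in_disc z) by (unfold in_disc; rewrite eCmod; lra).
  destruct (HT _ Hzhd (eps * eta / 4) ltac:(apply Rdiv_lt_0_compat; [apply Rmult_lt_0_compat|]; lra)) as [N1 HN1].
  destruct (HT _ Hzd (eps * eta / 4) ltac:(apply Rdiv_lt_0_compat; [apply Rmult_lt_0_compat|]; lra)) as [N2 HN2].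
  exists (Nat.max N1 N2). intros N HN.
  specialize (HN1 N ltac:(lia)). specialize (HN2 N ltac:(lia)).
  rewrite eCmod, eCminus, Cpsum_csum in HN1, HN2.
  pose proof (csum_diff_id b z h N) as Eid.
  set (S := csum (fun k => b k * Dp z k)%C N) in *.
  set (Ds := csum (fun k => b k * (Complex.Cpow (z+h) k - Complex.Cpow z k - h * Dp z k))%C N) in *.
  set (P1 := csum (fun k => b k * Complex.Cpow (z + h) k)%C N) in *.
  set (P0 := csum (fun k => b k * Complex.Cpow z k)%C N) in *.
  assert (HDs : Complex.Cmod Ds <= eps * eta / 4).
  { unfold Ds. eapply Rle_trans. apply Cmod_csum.
    apply Rle_trans with (sum_f_R0 (fun k => Complex.Cmod (b k) * INR k ^ 2 * rho ^ k) N * (eta^2 / rho^2)).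
    { rewrite Rmult_comm, scal_sum. apply sum_le_sum. intros k _. rewrite Cmod_mult.
      pose proof (D_bound z h rho k ltac:(lra) Hzh) as HDk. rewrite Hh in HDk.
      assert (Hr2 : 0 < rho ^ 2) by (apply pow_lt; lra).
      set (Dk := Complex.Cmod (Complex.Cpow (z + h) k - Complex.Cpow z k - h * Dp z k)%C) in *.
      assert (Dk <= INR k ^ 2 * rho ^ k * eta ^ 2 / rho ^ 2).
      { apply Rmult_le_reg_l with (rho^2). auto. field_simplify; lra. }
      apply Rle_trans with (Complex.Cmod (b k) * (INR k ^ 2 * rho ^ k * eta ^ 2 / rho ^ 2)).
      apply Rmult_le_compat_l; auto. apply Cmod_ge_0. right; field; lra. }
    apply Rle_trans with (B * (eta ^ 2 / rho ^ 2)).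
    apply Rmult_le_compat_r. apply Rmult_le_pos; [apply pow2_ge_0| apply Rlt_le, Rinv_0_lt_compat, pow_lt; lra]. apply HB.
    assert (eta * B <= eps * rho^2 / 4).
    { apply Rmult_le_reg_r with (/ B). apply Rinv_0_lt_compat; lra.
      replace (eta * B * / B) with eta by (field; lra).
      replace (eps * rho ^ 2 / 4 * / B) with (eps * rho ^ 2 / (4 * B)) by (field; lra). auto. }
    replace (B * (eta ^ 2 / rho ^ 2)) with ((eta * B) * eta / rho^2) by (field; lra).
    apply Rmult_le_reg_r with (rho^2). apply pow_lt; lra.
    field_simplify; try lra. nra. }
  assert (Eh : (h * (S - d))%C = ((P1 - F (z+h)%C) - (P0 - F z) + (F (z + h)%C - F z - d * h) - Ds)%C).
  { replace (h * (S - d))%C with ((h * S + Ds) - Ds - d * h)%C by ring. rewrite <- Eid. ring. }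
  assert (Hm : Complex.Cmod (h * (S - d))%C < eps * eta).
  { rewrite Eh. eapply Rle_lt_trans. apply Cmod_triangle. rewrite Cmod_opp.
    assert (Complex.Cmod (P1 - F (z + h) - (P0 - F z) + (F (z + h) - F z - d * h))%C < 3 * (eps * eta / 4)).
    { eapply Rle_lt_trans. apply Cmod_triangle.
      assert (Complex.Cmod (P1 - F (z + h) - (P0 - F z))%C < 2 * (eps * eta / 4)).
      { eapply Rle_lt_trans. apply Cmod_triangle. rewrite Cmod_opp. lra. }
      lra. }
    lra. }
  rewrite Cmod_mult, Hh in Hm.
  apply Rmult_lt_reg_l with eta; auto. lra.
Qed.
Lemma csum_S (f : nat -> C) m : csum f (S m) = (csum f m + f (S m))%C.
Proof. reflexivity. Qed.

Definition acoef (b : nat -> C) (j : nat) : C := (Complex.RtoC (INR (S j)) * b (S j))%C.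

Lemma Dsum_shift (b : nat -> C) z N :
  csum (fun k => b k * Dp z k)%C (S N) = csum (fun j => acoef b j * Complex.Cpow z j)%C N.
Proof.
  rewrite csum_shift. change (Dp z 0) with (Complex.RtoC 0). rewrite Cmult_0_r, Cplus_0_l.
  apply csum_ext. intros k _. rewrite Dp_S. unfold acoef. ring.
Qed.

Lemma deriv_limit F b z d : taylor_on_disc F b -> Complex.Cmod z < 1 -> has_Cderiv F z d ->
  forall eps, 0 < eps -> exists N0, forall N, (N0 <= N)%nat ->
   Complex.Cmod (csum (fun j => acoef b j * Complex.Cpow z j)%C N - d)%C < eps.
Proof.
  intros HT Hz HD eps Heps. destruct (deriv_series F b z d HT Hz HD eps Heps) as [N0 HN0].
  exists N0. intros N HN. rewrite <- Dsum_shift. apply HN0. lia.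
Qed.

Lemma acoef_bound F b rho : taylor_on_disc F b -> 0 < rho < 1 ->
  exists K mu, 0 <= K /\ 0 <= mu < 1 /\
   forall j, Complex.Cmod (acoef b j) * rho ^ j <= K * mu ^ j.
Proof.
  intros HT Hr. destruct (coef_k2 F b rho HT ltac:(lra)) as [K [mu [HK [Hmu H]]]].
  exists (K / rho), mu. split. apply Rmult_le_pos; [lra| apply Rlt_le, Rinv_0_lt_compat; lra].
  split; auto. intros j. specialize (H (S j)).
  unfold acoef. rewrite Cmod_mult, Cmod_R, Rabs_pos_eq by apply pos_INR.
  assert (Hb := Cmod_ge_0 (b (S j))).
  assert (Hj : 1 <= INR (S j)) by (rewrite S_INR; pose proof (pos_INR j); lra).
  assert (Hrj : 0 < rho ^ j) by (apply pow_lt; lra).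
  assert (Hmj : mu ^ (S j) <= mu ^ j) by (simpl; assert (0 <= mu ^ j) by (apply pow_le; lra); nra).
  simpl pow in H.
  apply Rle_trans with (INR (S j) * Complex.Cmod (b (S j)) * INR (S j) * rho ^ j).
  { assert (0 <= INR (S j) * Complex.Cmod (b (S j)) * rho ^ j).
    { apply Rmult_le_pos; [apply Rmult_le_pos|]; lra. }
    nra. }
  apply Rle_trans with (K * mu ^ (S j) / rho).
  { apply Rmult_le_reg_r with rho. lra. field_simplify; [|lra]. simpl pow. nra. }
  replace (K * mu ^ (S j) / rho) with (K / rho * mu ^ (S j)) by (field; lra).
  apply Rmult_le_compat_l; auto.
  apply Rmult_le_pos; [lra| apply Rlt_le, Rinv_0_lt_compat; lra].
Qed.

Lemma tail_diff (a : nat -> C) z rho K mu Kn M : 0 <= mu < 1 -> Complex.Cmod z <= rho ->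
  (forall j, Complex.Cmod (a j) * rho ^ j <= K * mu ^ j) -> (Kn <= M)%nat ->
  Complex.Cmod (csum (fun j => a j * Complex.Cpow z j)%C M - csum (fun j => a j * Complex.Cpow z j)%C Kn)%C
   <= K * (mu ^ (S Kn) - mu ^ (S M)) / (1 - mu).
Proof.
  intros Hmu Hz H HKM. induction HKM.
  { rewrite Csub_self, Cmod_0. unfold Rdiv. rewrite Rminus_diag, Rmult_0_r. lra. }
  rewrite csum_S. cbv beta.
  replace (csum (fun j : nat => a j * Complex.Cpow z j)%C m + a (S m) * Complex.Cpow z (S m) -
      csum (fun j : nat => a j * Complex.Cpow z j)%C Kn)%C
   with ((csum (fun j : nat => a j * Complex.Cpow z j)%C m - csum (fun j : nat => a j * Complex.Cpow z j)%C Kn)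
         + a (S m) * Complex.Cpow z (S m))%C by ring.
  eapply Rle_trans. apply Cmod_triangle.
  assert (Ht : Complex.Cmod (a (S m) * Complex.Cpow z (S m))%C <= K * mu ^ (S m)).
  { rewrite Cmod_mult, Cmod_pow. eapply Rle_trans; [| apply H].
    apply Rmult_le_compat_l. apply Cmod_ge_0. apply pow_incr. split; [apply Cmod_ge_0| auto]. }
  assert (E : K * (mu ^ S Kn - mu ^ S (S m)) / (1 - mu) = K * (mu ^ S Kn - mu ^ S m) / (1 - mu) + K * mu ^ S m).
  { simpl pow. field. lra. }
  rewrite E. lra.
Qed.

Lemma deriv_tail F b z d rho K mu Kn : taylor_on_disc F b -> Complex.Cmod z <= rho -> rho < 1 ->
  has_Cderiv F z d -> 0 <= mu < 1 ->
  (forall j, Complex.Cmod (acoef b j) * rho ^ j <= K * mu ^ j) ->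
  Complex.Cmod (d - csum (fun j => acoef b j * Complex.Cpow z j)%C Kn)%C <= K * mu ^ (S Kn) / (1 - mu).
Proof.
  intros HT Hz Hr HD Hmu H. apply le_epsilon. intros e He.
  destruct (deriv_limit F b z d HT ltac:(lra) HD e He) as [N0 HN0].
  set (N := Nat.max N0 Kn). specialize (HN0 N ltac:(unfold N; lia)).
  assert (Htl := tail_diff (acoef b) z rho K mu Kn N Hmu Hz H ltac:(unfold N; lia)).
  set (SN := csum (fun j => acoef b j * Complex.Cpow z j)%C N) in *.
  set (SK := csum (fun j => acoef b j * Complex.Cpow z j)%C Kn) in *.
  replace (d - SK)%C with ((-(SN - d)) + (SN - SK))%C by ring.
  eapply Rle_trans. apply Cmod_triangle. rewrite Cmod_opp.
  assert (K * (mu ^ S Kn - mu ^ S N) / (1 - mu) <= K * mu ^ S Kn / (1 - mu)).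
  { unfold Rdiv. apply Rmult_le_compat_r. apply Rlt_le, Rinv_0_lt_compat; lra.
    assert (0 <= mu ^ S N) by (apply pow_le; lra).
    assert (0 <= K).
    { specialize (H O). simpl in H. assert (0 <= Complex.Cmod (acoef b 0) * 1) by (rewrite Rmult_1_r; apply Cmod_ge_0). lra. }
    nra. }
  lra.
Qed.
Definition ucirc (a : R) : C := (cos a, sin a).

Lemma C_eq (x y : C) : fst x = fst y -> snd x = snd y -> x = y.
Proof. destruct x, y; simpl; intros; subst; reflexivity. Qed.

Lemma ucirc_mult a b : (ucirc a * ucirc b)%C = ucirc (a + b).
Proof. unfold ucirc. apply C_eq; simpl. rewrite cos_plus; ring. rewrite sin_plus; ring. Qed.

Lemma ucirc_conj a b : (ucirc a * Cconj (ucirc b))%C = ucirc (a - b).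
Proof. unfold ucirc, Cconj. apply C_eq; simpl. rewrite cos_minus; ring. rewrite sin_minus; ring. Qed.

Lemma ucirc_pow a k : Complex.Cpow (ucirc a) k = ucirc (INR k * a).
Proof.
  induction k. unfold ucirc. simpl. rewrite Rmult_0_l, cos_0, sin_0. reflexivity.
  rewrite Cpow_S, IHk, ucirc_mult, S_INR. f_equal. ring.
Qed.

Lemma Cmod_ucirc a : Complex.Cmod (ucirc a) = 1.
Proof.
  unfold Complex.Cmod. replace (fst (ucirc a) ^ 2 + snd (ucirc a) ^ 2) with 1. apply sqrt_1.
  unfold ucirc; simpl. pose proof (sin2_cos2 a). unfold Rsqr in H. nra.
Qed.

Lemma Cpow_mult (x y : C) k : Complex.Cpow (x * y)%C k = (Complex.Cpow x k * Complex.Cpow y k)%C.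
Proof. induction k. simpl. ring. rewrite !Cpow_S, IHk. ring. Qed.

Definition zp (rho th : R) (m : nat) : C := (Complex.RtoC rho * ucirc (INR m * th))%C.

Lemma zp_pow rho th m k :
  Complex.Cpow (zp rho th m) k = (Complex.RtoC (rho ^ k) * ucirc (INR k * (INR m * th)))%C.
Proof. unfold zp. rewrite Cpow_mult, Cpow_RtoC, ucirc_pow. reflexivity. Qed.

Lemma Cmod_zp rho th m : 0 <= rho -> Complex.Cmod (zp rho th m) = rho.
Proof. intros. unfold zp. rewrite Cmod_mult, Cmod_R, Cmod_ucirc, Rabs_pos_eq; lra. Qed.

Lemma conj_RtoC_mult r (u : C) : Cconj (Complex.RtoC r * u)%C = (Complex.RtoC r * Cconj u)%C.
Proof. unfold Cconj. apply C_eq; simpl; ring. Qed.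

Lemma zp_cross rho th m j L :
  (Complex.Cpow (zp rho th m) j * Cconj (Complex.Cpow (zp rho th m) L))%C =
  (Complex.RtoC (rho ^ j * rho ^ L) * ucirc (INR m * ((INR j - INR L) * th)))%C.
Proof.
  rewrite !zp_pow, conj_RtoC_mult.
  replace (Complex.RtoC (rho ^ j) * ucirc (INR j * (INR m * th)) * (Complex.RtoC (rho ^ L) * Cconj (ucirc (INR L * (INR m * th)))))%C
   with (Complex.RtoC (rho ^ j) * Complex.RtoC (rho ^ L) * (ucirc (INR j * (INR m * th)) * Cconj (ucirc (INR L * (INR m * th)))))%C by ring.
  rewrite ucirc_conj, <- RtoC_mult. f_equal. f_equal. ring.
Qed.

Lemma geom_csum (u : C) M : ((u - 1) * csum (fun m => Complex.Cpow u m) M)%C = (Complex.Cpow u (S M) - 1)%C.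
Proof. induction M. simpl. ring. rewrite csum_S, Cmult_plus_distr_l, IHM. rewrite !Cpow_S. ring. Qed.

Lemma root_sum N' j L : (j < L)%nat -> (L <= N')%nat ->
  csum (fun m => ucirc (INR m * ((INR j - INR L) * (2 * PI / INR (S N'))))) N' = 0%C.
Proof.
  intros HjL HL.
  set (th := 2 * PI / INR (S N')).
  set (al := (INR j - INR L) * th).
  assert (HN : 0 < INR (S N')) by (apply lt_0_INR; lia).
  assert (Hd : INR (L - j) = INR L - INR j) by (apply minus_INR; lia).
  assert (Hd1 : 1 <= INR (L - j)) by (apply (le_INR 1); lia).
  assert (Hd2 : INR (L - j) < INR (S N')) by (apply lt_INR; lia).
  set (u := ucirc al).
  assert (E : csum (fun m => ucirc (INR m * al)) N' = csum (fun m => Complex.Cpow u m) N').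
  { apply csum_ext. intros. unfold u. rewrite ucirc_pow. reflexivity. }
  rewrite E.
  assert (HuN : Complex.Cpow u (S N') = 1%C).
  { unfold u. rewrite ucirc_pow. unfold al, th.
    replace (INR (S N') * ((INR j - INR L) * (2 * PI / INR (S N')))) with (- (0 + 2 * INR (L - j) * PI)) by (rewrite Hd; field; lra).
    unfold ucirc. rewrite cos_neg, sin_neg, cos_period, sin_period, cos_0, sin_0. apply C_eq; simpl; lra. }
  assert (Hu1 : (u - 1)%C <> 0%C).
  { intros Hc. assert (Hc1 : fst (u - 1)%C = 0) by (rewrite Hc; reflexivity).
    assert (Hc2 : snd (u - 1)%C = 0) by (rewrite Hc; reflexivity).
    unfold u, ucirc in Hc1, Hc2. simpl in Hc1, Hc2.
    set (be := INR (L - j) * th).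
    assert (Hbe : al = - be) by (unfold al, be; rewrite Hd; ring).
    rewrite Hbe in Hc1, Hc2. rewrite cos_neg in Hc1. rewrite sin_neg in Hc2.
    assert (Hb0 : 0 < be).
    { unfold be, th. apply Rmult_lt_0_compat. lra. apply Rdiv_lt_0_compat; [pose proof PI_RGT_0; lra| lra]. }
    assert (Hb2 : be < 2 * PI).
    { unfold be, th. replace (INR (L - j) * (2 * PI / INR (S N'))) with (2 * PI * (INR (L - j) / INR (S N'))) by (field; lra).
      pose proof PI_RGT_0. rewrite <- (Rmult_1_r (2 * PI)) at 2. apply Rmult_lt_compat_l. lra.
      apply Rmult_lt_reg_r with (INR (S N')); auto. field_simplify; lra. }
    destruct (sin_eq_O_2PI_0 be ltac:(lra) ltac:(lra) ltac:(lra)) as [H|[H|H]]; try lra.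
    rewrite H, cos_PI in Hc1. lra. }
  assert (Hg := geom_csum u N'). rewrite HuN in Hg.
  set (Sg := csum (fun m => Complex.Cpow u m) N') in *.
  replace Sg with (/ (u - 1) * ((u - 1) * Sg))%C by (field; auto).
  rewrite Hg. ring.
Qed.

Definition Ppoly (c : nat -> C) (K : nat) (z : C) : C := csum (fun j => c j * Complex.Cpow z j)%C K.

Lemma orth_mono N' rho (cc : C) j L : (j < L)%nat -> (L <= N')%nat ->
  csum (fun m => cc * Complex.Cpow (zp rho (2 * PI / INR (S N')) m) j *
                 Cconj (Complex.Cpow (zp rho (2 * PI / INR (S N')) m) L))%C N' = 0%C.
Proof.
  intros HjL HL.
  rewrite (csum_ext _ (fun m => (cc * Complex.RtoC (rho ^ j * rho ^ L)) *
       ucirc (INR m * ((INR j - INR L) * (2 * PI / INR (S N')))))%C).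
  rewrite csum_scal, root_sum by auto. ring.
  intros m _. rewrite <- (Cmult_assoc cc). rewrite zp_cross. ring.
Qed.

Lemma orth_poly N' rho c K L : (K < L)%nat -> (L <= N')%nat ->
  csum (fun m => Ppoly c K (zp rho (2 * PI / INR (S N')) m) *
                 Cconj (Complex.Cpow (zp rho (2 * PI / INR (S N')) m) L))%C N' = 0%C.
Proof.
  intros HK HL. induction K.
  { rewrite <- (orth_mono N' rho (c O) 0 L) by lia. apply csum_ext. intros. unfold Ppoly. simpl. ring. }
  rewrite (csum_ext _ (fun m => (Ppoly c K (zp rho (2 * PI / INR (S N')) m) *
                 Cconj (Complex.Cpow (zp rho (2 * PI / INR (S N')) m) L)) +
             (c (S K) * Complex.Cpow (zp rho (2 * PI / INR (S N')) m) (S K) *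
                 Cconj (Complex.Cpow (zp rho (2 * PI / INR (S N')) m) L)))%C).
  rewrite csum_plus, IHK by lia. rewrite orth_mono by lia. ring.
  intros m _. unfold Ppoly. rewrite csum_S. ring.
Qed.

Lemma Cmod_sq (x : C) : Complex.Cmod x ^ 2 = fst x ^ 2 + snd x ^ 2.
Proof. apply Cmod2_alt. Qed.

Lemma Cmod_plus_sq (x y : C) : Complex.Cmod (x + y)%C ^ 2 = Complex.Cmod x ^ 2 + Complex.Cmod y ^ 2 + 2 * fst (x * Cconj y)%C.
Proof. rewrite !Cmod_sq. unfold Cconj. simpl. ring. Qed.

Lemma sum2_fst (g : nat -> C) N : sum_f_R0 (fun l => 2 * fst (g l)) N = 2 * fst (csum g N).
Proof. induction N; simpl. reflexivity. rewrite IHN. ring. Qed.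

Lemma parseval N' rho c K : 0 <= rho -> (K <= N')%nat ->
  sum_f_R0 (fun m => Complex.Cmod (Ppoly c K (zp rho (2 * PI / INR (S N')) m)) ^ 2) N' =
  INR (S N') * sum_f_R0 (fun j => Complex.Cmod (c j) ^ 2 * rho ^ (2 * j)) K.
Proof.
  intros Hr HK. set (th := 2 * PI / INR (S N')).
  induction K.
  { simpl sum_f_R0 at 2.
    rewrite (sum_eq _ (fun _ => Complex.Cmod (c O) ^ 2 * rho ^ (2 * 0))).
    rewrite sum_cte. simpl. ring.
    intros m _. unfold Ppoly. change (csum ?f 0%nat) with (f 0%nat). cbv beta. rewrite Cmod_mult, Cmod_pow, Cmod_zp by auto. simpl. ring. }
  rewrite (sum_eq _ (fun m => Complex.Cmod (Ppoly c K (zp rho th m)) ^ 2 +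
       Complex.Cmod (c (S K)) ^ 2 * rho ^ (2 * S K) +
       2 * fst (Ppoly c K (zp rho th m) * Cconj (c (S K) * Complex.Cpow (zp rho th m) (S K)))%C)).
  2: { intros m _. unfold Ppoly at 1. rewrite csum_S. fold (Ppoly c K (zp rho th m)).
       rewrite Cmod_plus_sq. rewrite Cmod_mult, Cmod_pow, Cmod_zp by auto.
       rewrite Rpow_mult_distr, <- !pow_mult, (Nat.mul_comm (S K) 2). ring. }
  rewrite !sum_plus, sum_cte, IHK by lia.
  rewrite sum2_fst.
  rewrite (csum_ext _ (fun m => Cconj (c (S K)) * (Ppoly c K (zp rho th m) * Cconj (Complex.Cpow (zp rho th m) (S K))))%C).
  rewrite csum_scal. unfold th. rewrite orth_poly by lia. simpl fst. rewrite tech5. ring.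
  intros m _. rewrite Cmult_conj. ring.
Qed.
Lemma L2_bound F b F' rho : taylor_on_disc F b ->
  (forall z : Cx, in_disc z -> has_Cderiv F z (F' z) /\ Cmod (F' z) <= 1 / (1 - Cmod z ^ 2)) ->
  0 < rho < 1 -> forall K,
  sum_f_R0 (fun j => Complex.Cmod (acoef b j) ^ 2 * rho ^ (2 * j)) K <= (1 / (1 - rho ^ 2)) ^ 2.
Proof.
  intros HT HB Hr K.
  set (M := 1 / (1 - rho ^ 2)).
  assert (HM : 0 < M) by (unfold M; apply Rdiv_lt_0_compat; nra).
  destruct (acoef_bound F b rho HT Hr) as [Ka [mu [HKa [Hmu Ha]]]].
  apply le_epsilon. intros e He.
  set (eps := Rmin 1 (e / (2 * M + 1))).
  assert (Heps0 : 0 < eps) by (unfold eps; apply Rmin_pos; [lra| apply Rdiv_lt_0_compat; lra]).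
  assert (Heps1 : eps <= 1) by apply Rmin_l.
  assert (Heps2 : eps <= e / (2 * M + 1)) by apply Rmin_r.
  assert (Hfin : (M + eps) ^ 2 <= M ^ 2 + e).
  { assert (eps * (2 * M + 1) <= e).
    { apply Rmult_le_reg_r with (/ (2*M+1)). apply Rinv_0_lt_compat; lra.
      replace (eps * (2 * M + 1) * / (2 * M + 1)) with eps by (field; lra). auto. }
    nra. }
  eapply Rle_trans; [| apply Hfin].
  destruct (pow_lt_1_zero mu ltac:(rewrite Rabs_pos_eq; lra) (eps * (1 - mu) / (Ka + 1))
     ltac:(apply Rdiv_lt_0_compat; [apply Rmult_lt_0_compat|]; lra)) as [N1 HN1].
  set (K' := Nat.max K N1).
  set (th := 2 * PI / INR (S K')).
  assert (Hpt : forall m, Complex.Cmod (Ppoly (acoef b) K' (zp rho th m)) ^ 2 <= (M + eps) ^ 2).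
  { intros m. set (z := zp rho th m).
    assert (Hz : Complex.Cmod z = rho) by (apply Cmod_zp; lra).
    assert (Hzd : in_disc z) by (unfold in_disc; rewrite eCmod; lra).
    destruct (HB z Hzd) as [HD HF0].
    assert (HF : Complex.Cmod (F' z) <= M) by (unfold M; rewrite <- Hz; exact HF0).
    assert (Htl := deriv_tail F b z (F' z) rho Ka mu K' HT ltac:(lra) ltac:(lra) HD Hmu Ha).
    assert (Hmu' : Ka * mu ^ S K' / (1 - mu) <= eps).
    { specialize (HN1 (S K') ltac:(unfold K'; lia)). rewrite Rabs_pos_eq in HN1 by (apply pow_le; lra).
      apply Rmult_le_reg_r with (1 - mu). lra.
      replace (Ka * mu ^ S K' / (1 - mu) * (1 - mu)) with (Ka * mu ^ S K') by (field; lra).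
      assert (Hm0 : 0 <= mu ^ S K') by (apply pow_le; lra).
      assert (mu ^ S K' * (Ka + 1) <= eps * (1 - mu)).
      { apply Rlt_le. apply Rmult_lt_reg_r with (/ (Ka + 1)). apply Rinv_0_lt_compat; lra.
        replace (mu ^ S K' * (Ka + 1) * / (Ka + 1)) with (mu ^ S K') by (field; lra). exact HN1. }
      nra. }
    assert (Hp : Complex.Cmod (Ppoly (acoef b) K' z) <= M + eps).
    { replace (Ppoly (acoef b) K' z) with (F' z - (F' z - Ppoly (acoef b) K' z))%C by ring.
      eapply Rle_trans. apply Cmod_triangle. rewrite Cmod_opp. unfold Ppoly. lra. }
    apply pow_incr. split; [apply Cmod_ge_0| auto]. }
  assert (Hsum := parseval K' rho (acoef b) K' ltac:(lra) (le_n _)). fold th in Hsum.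
  assert (Hle : sum_f_R0 (fun m => Complex.Cmod (Ppoly (acoef b) K' (zp rho th m)) ^ 2) K' <= (M + eps) ^ 2 * INR (S K')).
  { rewrite <- sum_cte. apply sum_le_sum. intros; apply Hpt. }
  rewrite Hsum in Hle.
  assert (HN : 0 < INR (S K')) by (apply lt_0_INR; lia).
  apply Rle_trans with (sum_f_R0 (fun j => Complex.Cmod (acoef b j) ^ 2 * rho ^ (2 * j)) K').
  { apply sum_mono. intros; apply Rmult_le_pos; [apply pow2_ge_0| apply pow_le; lra]. unfold K'; lia. }
  apply Rmult_le_reg_l with (INR (S K')); auto. lra.
Qed.
Lemma sum_shift_le (g : nat -> R) n m : (forall k, 0 <= g k) ->
  sum_f_R0 (fun i => g (n + i)%nat) m <= sum_f_R0 g (n + m).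
Proof.
  intros Hg. induction m.
  { simpl. rewrite Nat.add_0_r. apply sum_term_le; auto. }
  simpl. replace (n + S m)%nat with (S (n + m)) by lia. simpl. lra.
Qed.

Lemma sum_scal_l (c : R) f m : sum_f_R0 (fun i => c * f i) m = c * sum_f_R0 f m.
Proof. induction m; simpl. reflexivity. rewrite IHm. ring. Qed.

Lemma Un_cv_const (B : R) : Un_cv (fun _ => B) B.
Proof. intros eps He. exists O. intros. unfold Rdist. rewrite Rminus_diag, Rabs_R0. lra. Qed.

Lemma part1 (n : nat) (Hn : (1 <= n)%nat) :
  (forall (F : Cx -> Cx) (b : nat -> Cx),
     in_Bloch_B F -> taylor_on_disc F b ->
     forall r : R, 0 <= r <= sqrt (INR n / INR (n + 2)) ->
       exists l : R, Un_cv (tail_sum b n r) l /\ l <= sharp_bound n r).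
Proof.
  intros F b [F' HB] HT r Hr.
  assert (Hn0 : 1 <= INR n) by (apply (le_INR 1); lia).
  assert (Hn2 : INR (n + 2) = INR n + 2) by (rewrite plus_INR; simpl; ring).
  set (t0 := INR n / INR (n + 2)).
  assert (Ht0 : 0 < t0 < 1).
  { unfold t0. rewrite Hn2. split. apply Rdiv_lt_0_compat; lra.
    apply Rmult_lt_reg_r with (INR n + 2). lra. field_simplify; lra. }
  set (rho := sqrt t0).
  assert (Hrho2 : rho ^ 2 = t0) by (unfold rho; apply pow2_sqrt; lra).
  assert (Hrho : 0 < rho < 1).
  { unfold rho. split. apply sqrt_lt_R0; lra. rewrite <- sqrt_1. apply sqrt_lt_1; lra. }
  assert (HL2 := L2_bound F b F' rho HT HB Hrho).
  assert (HM : 1 / (1 - rho ^ 2) = (INR n + 2) / 2).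
  { rewrite Hrho2. unfold t0. rewrite Hn2. field. lra. }
  rewrite HM in HL2.
  set (t := r ^ 2).
  assert (Ht : 0 <= t <= t0).
  { unfold t. split. apply pow2_ge_0. rewrite <- Hrho2. apply pow_incr. fold t0 rho in Hr. lra. }
  set (g := fun j => Complex.Cmod (acoef b j) ^ 2 * t0 ^ j).
  assert (Hg0 : forall j, 0 <= g j) by (intros; unfold g; apply Rmult_le_pos; [apply pow2_ge_0| apply pow_le; lra]).
  assert (HL2' : forall K, sum_f_R0 g K <= ((INR n + 2) / 2) ^ 2).
  { intros K. eapply Rle_trans; [| apply (HL2 K)]. right. apply sum_eq. intros j _. unfold g.
    rewrite pow_mult, Hrho2. reflexivity. }
  set (Bd := (t / t0) ^ n * ((INR n + 2) / 2) ^ 2).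
  assert (Hterm : forall i, INR (n + 1 + i) ^ 2 * Cmod (b (n + 1 + i)%nat) ^ 2 * r ^ (2 * (n + 1 + i) - 2)
                     <= (t / t0) ^ n * g (n + i)%nat).
  { intros i. unfold g, acoef. rewrite Cmod_mult, Cmod_R, Rabs_pos_eq by apply pos_INR.
    replace (S (n + i)) with (n + 1 + i)%nat by lia.
    replace (2 * (n + 1 + i) - 2)%nat with (2 * (n + i))%nat by lia.
    rewrite pow_mult. fold t. rewrite eCmod.
    set (A := INR (n + 1 + i) ^ 2 * Complex.Cmod (b (n + 1 + i)%nat) ^ 2).
    replace ((INR (n + 1 + i) * Complex.Cmod (b (n + 1 + i)%nat)) ^ 2 * t0 ^ (n + i)) with (A * t0 ^ (n + i))
      by (unfold A; ring).
    assert (HA : 0 <= A) by (unfold A; apply Rmult_le_pos; apply pow2_ge_0).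
    rewrite !pow_add.
    unfold Rdiv. rewrite Rpow_mult_distr, pow_inv.
    assert (Hti : t ^ i <= t0 ^ i) by (apply pow_incr; lra).
    assert (Hp : 0 < t0 ^ n) by (apply pow_lt; lra).
    assert (Htn : 0 <= t ^ n) by (apply pow_le; lra).
    replace (t ^ n * / t0 ^ n * (A * (t0 ^ n * t0 ^ i))) with (A * t ^ n * t0 ^ i) by (field; lra).
    replace (A * (t ^ n * t ^ i)) with (A * t ^ n * t ^ i) by ring.
    apply Rmult_le_compat_l; auto. apply Rmult_le_pos; auto. }
  assert (Hbound : forall m, tail_sum b n r m <= Bd).
  { intros m. unfold tail_sum.
    apply Rle_trans with (sum_f_R0 (fun i => (t / t0) ^ n * g (n + i)%nat) m).
    apply sum_le_sum. intros i _. apply Hterm.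
    rewrite sum_scal_l.
    unfold Bd. apply Rmult_le_compat_l. apply pow_le. apply Rmult_le_pos; [lra| apply Rlt_le, Rinv_0_lt_compat; lra].
    eapply Rle_trans. apply (sum_shift_le g n m Hg0). apply HL2'. }
  assert (Hgrow : Un_growing (tail_sum b n r)).
  { intros m. unfold tail_sum. rewrite tech5.
    assert (0 <= INR (n + 1 + S m) ^ 2 * Cmod (b (n + 1 + S m)%nat) ^ 2 * r ^ (2 * (n + 1 + S m) - 2)).
    { apply Rmult_le_pos. apply Rmult_le_pos; apply pow2_ge_0. apply pow_le; lra. }
    lra. }
  destruct (growing_cv _ Hgrow) as [l Hl].
  { exists Bd. intros x [m Hm]. rewrite Hm. apply Hbound. }
  exists l. split; auto.
  assert (Hlb : l <= Bd) by (apply (Rle_cv_lim Hbound Hl (Un_cv_const Bd))).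
  assert (EB : Bd = sharp_bound n r).
  { unfold Bd, sharp_bound, t, t0. rewrite Hn2.
    rewrite pow_mult, pow_add. unfold Rdiv. rewrite !Rpow_mult_distr, !pow_inv.
    assert (E1 : (INR n * / (INR n + 2)) ^ n = INR n ^ n * / ((INR n + 2) ^ n)) by (rewrite Rpow_mult_distr, pow_inv; reflexivity).
    rewrite E1. field. repeat split; try (apply pow_nonzero); lra. }
  lra.
Qed.
Lemma exp_pow_nat a k : exp a ^ k = exp (INR k * a).
Proof. induction k. simpl. rewrite Rmult_0_l, exp_0. reflexivity.
  simpl pow. rewrite IHk, S_INR, <- exp_plus. f_equal. ring. Qed.

Lemma cst_pos n : (1 <= n)%nat -> 0 < cst n.
Proof.
  intros Hn. unfold cst, Rpower. apply Rmult_lt_0_compat.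
  apply Rdiv_lt_0_compat; [apply lt_0_INR; lia| lra]. apply exp_pos.
Qed.

Lemma cst_sq n : (1 <= n)%nat -> cst n ^ 2 = ((INR n + 2) / 2) ^ 2 * ((INR n + 2) / INR n) ^ n.
Proof.
  intros Hn. assert (Hn0 : 1 <= INR n) by (apply (le_INR 1); lia).
  assert (Hn2 : INR (n + 2) = INR n + 2) by (rewrite plus_INR; simpl; ring).
  unfold cst. rewrite Hn2. rewrite Rpow_mult_distr. f_equal.
  simpl pow. rewrite Rmult_1_r, <- Rpower_plus.
  replace (INR n / 2 + INR n / 2) with (INR n) by field.
  apply Rpower_pow. apply Rdiv_lt_0_compat; lra.
Qed.

Lemma cst_sq' n : (1 <= n)%nat -> cst n ^ 2 = INR (n + 2) ^ (n + 2) / (4 * INR n ^ n).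
Proof.
  intros Hn. rewrite cst_sq by auto.
  assert (Hn0 : 1 <= INR n) by (apply (le_INR 1); lia).
  assert (Hn2 : INR (n + 2) = INR n + 2) by (rewrite plus_INR; simpl; ring).
  rewrite Hn2, pow_add. unfold Rdiv. rewrite !Rpow_mult_distr, !pow_inv.
  field. repeat split; try apply pow_nonzero; lra.
Qed.

Lemma bloch_ineq n x : (1 <= n)%nat -> 0 <= x < 1 -> cst n * x ^ n <= 1 / (1 - x ^ 2).
Proof.
  intros Hn Hx.
  assert (Hn0 : 1 <= INR n) by (apply (le_INR 1); lia).
  set (s := x ^ 2).
  assert (Hs : 0 <= s < 1) by (unfold s; split; [apply pow2_ge_0| nra]).
  set (y := cst n * x ^ n * (1 - s)).
  assert (Hc := cst_pos n Hn).
  assert (Hy0 : 0 <= y) by (unfold y; apply Rmult_le_pos; [apply Rmult_le_pos; [lra| apply pow_le; lra]| lra]).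
  set (u := (INR n + 2) * s / INR n).
  set (v := (INR n + 2) * (1 - s) / 2).
  set (al := u - 1).
  assert (Hu0 : 0 <= u) by (unfold u; apply Rmult_le_pos; [nra| apply Rlt_le, Rinv_0_lt_compat; lra]).
  assert (Hv0 : 0 <= v) by (unfold v; nra).
  assert (Hv : v = 1 + (- (INR n * al / 2))) by (unfold v, al, u; field; lra).
  assert (Hy2 : y ^ 2 = u ^ n * v ^ 2).
  { unfold y. rewrite !Rpow_mult_distr, cst_sq by auto. unfold u, v, s.
    rewrite <- pow_mult. rewrite Nat.mul_comm, pow_mult.
    unfold Rdiv. rewrite !Rpow_mult_distr, !pow_inv.
    field. repeat split; try apply pow_nonzero; lra. }
  assert (Hun : u ^ n <= exp (INR n * al)).
  { rewrite <- exp_pow_nat. apply pow_incr. split; auto. pose proof (exp_ineq1_le al). unfold al in *. lra. }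
  assert (Hv2 : v ^ 2 <= exp (- (INR n * al))).
  { replace (- (INR n * al)) with (INR 2 * (- (INR n * al / 2))) by (simpl; field).
    rewrite <- exp_pow_nat. apply pow_incr. split; auto. pose proof (exp_ineq1_le (- (INR n * al / 2))). lra. }
  assert (Hy2' : y ^ 2 <= 1).
  { rewrite Hy2. replace 1 with (exp (INR n * al) * exp (- (INR n * al))).
    apply Rmult_le_compat; auto. apply pow_le; auto. apply pow2_ge_0.
    rewrite <- exp_plus. rewrite Rplus_opp_r. apply exp_0. }
  assert (Hy1 : y <= 1) by nra.
  apply Rmult_le_reg_r with (1 - s). lra.
  replace (1 / (1 - s) * (1 - s)) with 1 by (field; lra). exact Hy1.
Qed.

Lemma mono_deriv (c : C) k z : has_Cderiv (fun w => c * Complex.Cpow w k)%C z (c * Dp z k)%C.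
Proof.
  intros eps Heps.
  set (rho := Complex.Cmod z + 1).
  assert (Hz0 := Cmod_ge_0 z).
  assert (Hr : 1 <= rho) by (unfold rho; lra).
  set (Cc := Complex.Cmod c * INR k ^ 2 * rho ^ k / rho ^ 2).
  assert (HC : 0 <= Cc).
  { unfold Cc. apply Rmult_le_pos. apply Rmult_le_pos. apply Rmult_le_pos. apply Cmod_ge_0. apply pow2_ge_0.
    apply pow_le; lra. apply Rlt_le, Rinv_0_lt_compat, pow_lt; lra. }
  exists (Rmin 1 (eps / (Cc + 1))). split.
  { apply Rmin_pos. lra. apply Rdiv_lt_0_compat; lra. }
  intros h Hh. rewrite eCmod in Hh.
  assert (Hh1 : Complex.Cmod h < 1) by (eapply Rlt_le_trans; [apply Hh| apply Rmin_l]).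
  assert (Hh2 : Complex.Cmod h < eps / (Cc + 1)) by (eapply Rlt_le_trans; [apply Hh| apply Rmin_r]).
  change (Complex.Cmod (c * Complex.Cpow (z + h) k - c * Complex.Cpow z k - c * Dp z k * h)%C <= eps * Complex.Cmod h).
  replace (c * Complex.Cpow (z + h) k - c * Complex.Cpow z k - c * Dp z k * h)%C
    with (c * (Complex.Cpow (z + h) k - Complex.Cpow z k - h * Dp z k))%C by ring.
  rewrite Cmod_mult.
  assert (Hzh : Complex.Cmod (z + h)%C <= rho) by (eapply Rle_trans; [apply Cmod_triangle| unfold rho; lra]).
  pose proof (D_bound z h rho k ltac:(unfold rho; lra) Hzh) as HD.
  set (Dk := Complex.Cmod (Complex.Cpow (z + h) k - Complex.Cpow z k - h * Dp z k)%C) in *.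
  assert (Hr2 : 0 < rho ^ 2) by (apply pow_lt; lra).
  assert (HDk : Dk <= INR k ^ 2 * rho ^ k / rho ^ 2 * Complex.Cmod h ^ 2).
  { apply Rmult_le_reg_l with (rho ^ 2); auto. field_simplify; lra. }
  assert (Hc0 := Cmod_ge_0 c).
  apply Rle_trans with (Cc * Complex.Cmod h ^ 2).
  { unfold Cc. replace (Complex.Cmod c * INR k ^ 2 * rho ^ k / rho ^ 2 * Complex.Cmod h ^ 2)
      with (Complex.Cmod c * (INR k ^ 2 * rho ^ k / rho ^ 2 * Complex.Cmod h ^ 2)) by (field; lra).
    apply Rmult_le_compat_l; auto. }
  assert (Hh0 : 0 < Complex.Cmod h) by lra.
  assert (Cc * Complex.Cmod h <= eps).
  { apply Rle_trans with ((Cc + 1) * (eps / (Cc + 1))). apply Rmult_le_compat; lra.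
    right; field; lra. }
  simpl pow. nra.
Qed.
Lemma taylor_zero_coef (d : nat -> C) : taylor_on_disc (fun _ => RtoC 0) d -> forall k, d k = 0%C.
Proof.
  intros HT.
  destruct (coef_bounded _ d (3/4) HT ltac:(lra)) as [A [HA0 HA]].
  intros k. induction k as [k IH] using (well_founded_induction Wf_nat.lt_wf).
  set (B := 3 * A * (4/3) ^ (S k)).
  assert (HB0 : 0 <= B) by (unfold B; apply Rmult_le_pos; [lra| apply pow_le; lra]).
  assert (Hx : forall x, 0 < x <= 1/2 -> Complex.Cmod (d k) <= B * x).
  { intros x Hx. set (z := Complex.RtoC x). set (mu := 4 * x / 3).
    assert (Hmu : 0 <= mu < 1) by (unfold mu; lra).
    assert (Hbd : forall j, Complex.Cmod (d j) * x ^ j <= A * mu ^ j).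
    { intros j. replace (x ^ j) with ((3/4) ^ j * mu ^ j) by (unfold mu; rewrite <- Rpow_mult_distr; f_equal; field).
      rewrite <- Rmult_assoc. apply Rmult_le_compat_r. apply pow_le; lra. apply HA. }
    assert (Hz : Complex.Cmod z <= x) by (unfold z; rewrite Cmod_R, Rabs_pos_eq; lra).
    assert (HSk : csum (fun j => d j * Complex.Cpow z j)%C k = (d k * Complex.Cpow z k)%C).
    { destruct k. reflexivity. rewrite csum_S. rewrite csum_zero. ring. intros j Hj. rewrite (IH j) by lia. ring. }
    assert (Hxk : 0 < x ^ k) by (apply pow_lt; lra).
    apply Rmult_le_reg_r with (x ^ k); auto.
    apply le_epsilon. intros e He.
    assert (Hzd : in_disc z) by (unfold in_disc; rewrite eCmod; unfold z; rewrite Cmod_R, Rabs_pos_eq; lra).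
    destruct (HT z Hzd e He) as [N HN].
    set (N' := Nat.max N k).
    specialize (HN N' ltac:(unfold N'; lia)).
    assert (HN2 : Complex.Cmod (csum (fun j => d j * Complex.Cpow z j)%C N') < e).
    { rewrite <- Cpsum_csum. eapply Rle_lt_trans; [| exact HN]. right.
      change (Complex.Cmod (Cpsum d z N') = Complex.Cmod (Cpsum d z N' - Complex.RtoC 0)%C). f_equal.
      apply C_eq; simpl; ring. }
    assert (Htl := tail_diff d z x A mu k N' Hmu Hz Hbd ltac:(unfold N'; lia)).
    rewrite HSk in Htl.
    assert (Hdk : Complex.Cmod (d k * Complex.Cpow z k)%C <= e + A * (mu ^ S k - mu ^ S N') / (1 - mu)).
    { set (SN := csum (fun j => d j * Complex.Cpow z j)%C N') in *.
      replace (d k * Complex.Cpow z k)%C with (SN - (SN - d k * Complex.Cpow z k))%C by ring.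
      eapply Rle_trans. apply Cmod_triangle. rewrite Cmod_opp. lra. }
    unfold z in Hdk. rewrite Cmod_term in Hdk by lra.
    assert (A * (mu ^ S k - mu ^ S N') / (1 - mu) <= B * x * x ^ k).
    { apply Rle_trans with (A * mu ^ S k / (1 - mu)).
      { unfold Rdiv. apply Rmult_le_compat_r. apply Rlt_le, Rinv_0_lt_compat; lra.
        assert (0 <= mu ^ S N') by (apply pow_le; lra). nra. }
      apply Rle_trans with (3 * A * mu ^ S k).
      { apply Rmult_le_reg_r with (1 - mu). lra. replace (A * mu ^ S k / (1 - mu) * (1 - mu)) with (A * mu ^ S k) by (field; lra).
        assert (0 <= A * mu ^ S k) by (apply Rmult_le_pos; [lra| apply pow_le; lra]). unfold mu in *. nra. }
      right. unfold B, mu. replace (4 * x / 3) with (4/3 * x) by field. rewrite Rpow_mult_distr. simpl pow. ring. }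
    lra. }
  apply Cmod_eq_0.
  assert (Hc0 := Cmod_ge_0 (d k)).
  destruct (Rle_lt_dec (Complex.Cmod (d k)) 0) as [Hle|Hlt]. lra.
  exfalso. set (c := Complex.Cmod (d k)) in *.
  set (x := Rmin (1/2) (c / (2 * (B + 1)))).
  assert (Hx0 : 0 < x) by (unfold x; apply Rmin_pos; [lra| apply Rdiv_lt_0_compat; lra]).
  assert (Hx1 : x <= 1/2) by apply Rmin_l.
  assert (Hx2 : x <= c / (2 * (B + 1))) by apply Rmin_r.
  specialize (Hx x (conj Hx0 Hx1)).
  assert (B * x <= B * (c / (2 * (B+1)))) by (apply Rmult_le_compat_l; auto).
  assert (B * (c / (2 * (B+1))) < c).
  { apply Rmult_lt_reg_r with (2 * (B + 1)). lra. field_simplify; nra. }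
  lra.
Qed.

Definition cprime n := cst n / INR (S n).
Definition Fex n (z : Cx) : Cx := (Complex.RtoC (cprime n) * Complex.Cpow z (S n))%C.
Definition en n (k : nat) : Cx := if Nat.eqb k (S n) then Complex.RtoC (cprime n) else Complex.RtoC 0.

Lemma en_psum n z N : csum (fun k => en n k * Complex.Cpow z k)%C N =
  if Nat.ltb N (S n) then 0%C else (Complex.RtoC (cprime n) * Complex.Cpow z (S n))%C.
Proof.
  induction N.
  { simpl. unfold en. simpl. ring. }
  rewrite csum_S, IHN. unfold en.
  destruct (Nat.ltb_spec N (S n)); destruct (Nat.eqb_spec (S N) (S n)); destruct (Nat.ltb_spec (S N) (S n));
    try lia; try ring.
  inversion e. subst. ring.
Qed.

Lemma en_taylor n : taylor_on_disc (Fex n) (en n).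
Proof.
  intros z Hz eps He. exists (S n). intros m Hm.
  rewrite Cpsum_csum, en_psum. destruct (Nat.ltb_spec m (S n)). lia.
  rewrite eCmod, eCminus. unfold Fex. rewrite Csub_self, Cmod_0. auto.
Qed.

Lemma sum_first_only (f : nat -> R) m : (forall i, f (S i) = 0) -> sum_f_R0 f m = f O.
Proof. intros H. induction m. reflexivity. simpl. rewrite IHm, H. ring. Qed.

Lemma part2 (n : nat) (Hn : (1 <= n)%nat) :
  (exists Fn : Cx -> Cx,
     in_Bloch_B Fn /\ Fn (RtoC 0) = RtoC 0 /\
     (forall z : Cx, in_disc z -> has_Cderiv Fn z (Cmult (RtoC (cst n)) (Cpow z n))) /\
     (exists bn : nat -> Cx, taylor_on_disc Fn bn) /\
     (forall bn : nat -> Cx, taylor_on_disc Fn bn ->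
        forall r : R, 0 <= r <= sqrt (INR n / INR (n + 2)) ->
          Un_cv (tail_sum bn n r) (sharp_bound n r))).
Proof.
  assert (Hc := cst_pos n Hn).
  assert (HSn : 0 < INR (S n)) by (apply lt_0_INR; lia).
  assert (Hcp : 0 < cprime n) by (unfold cprime; apply Rdiv_lt_0_compat; auto).
  assert (Hder : forall z : Cx, has_Cderiv (Fex n) z (Cmult (RtoC (cst n)) (Cpow z n))).
  { intros z. rewrite eCmult, eRtoC, eCpow.
    replace (Complex.RtoC (cst n) * Complex.Cpow z n)%C with (Complex.RtoC (cprime n) * Dp z (S n))%C.
    apply mono_deriv.
    rewrite Dp_S, Cmult_assoc, <- RtoC_mult. unfold cprime. f_equal. f_equal. field. lra. }
  exists (Fex n). split; [| split; [| split; [| split]]].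
  - exists (fun z => Cmult (RtoC (cst n)) (Cpow z n)). intros z Hz. split. apply Hder.
    rewrite !eCmod, eCmult, eRtoC, eCpow, Cmod_mult, Cmod_R, Rabs_pos_eq, Cmod_pow by lra.
    apply bloch_ineq; auto. split. apply Cmod_ge_0. unfold in_disc in Hz. rewrite eCmod in Hz. auto.
  - unfold Fex. rewrite Cpow_S. apply C_eq; simpl; ring.
  - intros z _. apply Hder.
  - exists (en n). apply en_taylor.
  - intros bn HT r Hr.
    set (d := fun k => (bn k - en n k)%C).
    assert (HTd : taylor_on_disc (fun _ => RtoC 0) d).
    { intros z Hz eps He.
      destruct (HT z Hz (eps/2) ltac:(lra)) as [N1 H1].
      destruct (en_taylor n z Hz (eps/2) ltac:(lra)) as [N2 H2].
      exists (Nat.max N1 N2). intros m Hm. specialize (H1 m ltac:(lia)). specialize (H2 m ltac:(lia)).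
      rewrite eCmod, eCminus, Cpsum_csum in *.
      assert (E : csum (fun k => d k * Complex.Cpow z k)%C m =
                  (csum (fun k => bn k * Complex.Cpow z k)%C m - csum (fun k => en n k * Complex.Cpow z k)%C m)%C).
      { rewrite <- csum_minus. apply csum_ext. intros; unfold d; ring. }
      rewrite E.
      set (P1 := csum (fun k => bn k * Complex.Cpow z k)%C m) in *.
      set (P2 := csum (fun k => en n k * Complex.Cpow z k)%C m) in *.
      replace (P1 - P2 - RtoC 0)%C with ((P1 - Fex n z) - (P2 - Fex n z))%C.
      eapply Rle_lt_trans. apply Cmod_triangle. rewrite Cmod_opp. lra.
      unfold RtoC. apply C_eq; simpl; ring. }
    assert (Hbn : forall k, bn k = en n k).
    { intros k. assert (H0 := taylor_zero_coef d HTd k). unfold d in H0.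
      apply C_eq; [apply (f_equal fst) in H0| apply (f_equal snd) in H0]; simpl in H0; lra. }
    assert (Htail : forall m, tail_sum bn n r m = sharp_bound n r).
    { intros m. unfold tail_sum. rewrite sum_first_only.
      - rewrite Hbn. replace (n + 1 + 0)%nat with (S n) by lia. unfold en. rewrite Nat.eqb_refl.
        rewrite eCmod, Cmod_R, Rabs_pos_eq by lra.
        replace (2 * S n - 2)%nat with (2 * n)%nat by lia.
        unfold sharp_bound. rewrite <- cst_sq' by auto. unfold cprime. field. lra.
      - intros i. rewrite Hbn. unfold en. replace (Nat.eqb (n + 1 + S i) (S n)) with false.
        rewrite eCmod, Cmod_0. ring. symmetry. apply Nat.eqb_neq. lia. }
    intros eps He. exists O. intros m _. rewrite Htail. unfold Rdist. rewrite Rminus_diag, Rabs_R0. auto.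
Qed.

Theorem proposition1 (n : nat) (Hn : (1 <= n)%nat) :
  (forall (F : Cx -> Cx) (b : nat -> Cx),
     in_Bloch_B F -> taylor_on_disc F b ->
     forall r : R, 0 <= r <= sqrt (INR n / INR (n + 2)) ->
       exists l : R, Un_cv (tail_sum b n r) l /\ l <= sharp_bound n r)
  /\
  (exists Fn : Cx -> Cx,
     in_Bloch_B Fn /\ Fn (RtoC 0) = RtoC 0 /\
     (forall z : Cx, in_disc z -> has_Cderiv Fn z (Cmult (RtoC (cst n)) (Cpow z n))) /\
     (exists bn : nat -> Cx, taylor_on_disc Fn bn) /\
     (forall bn : nat -> Cx, taylor_on_disc Fn bn ->
        forall r : R, 0 <= r <= sqrt (INR n / INR (n + 2)) ->
          Un_cv (tail_sum bn n r) (sharp_bound n r))).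
Proof. split. apply part1; auto. apply part2; auto. Qed.
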